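(* Let $\Gamma$ be a countable discrete group and $\mu$ a probability measure on $\Gamma$ whose support generates $\Gamma$ as a semigroup. If $\lambda\in\mathbb T$ is a peripheral eigenvalue of $\mathcal P_\mu$, i.e. there is $0\neq T\in\mathcal B(\ell^2(\Gamma))$ with $\mathcal P_\mu(T)=\lambda T$, then $\lambda^k=1$ for some positive integer $k$.
   Context: $\rho$ denotes the right regular representation of $\Gamma$ on $\ell^2(\Gamma)$, $\rho_g\delta_x=\delta_{xg^{-1}}$. The Markov operator $\mathcal P_\mu:\mathcal B(\ell^2(\Gamma))\to\mathcal B(\ell^2(\Gamma))$ is $\mathcal P_\mu(T)=\sum_{g\in\Gamma}\mu(g)\rho_gT\rho_g^*$. *)

(* Defs.v *)
From Stdlib Require Import Reals List.
From Coquelicot Require Import Coquelicot.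
Open Scope R_scope.

Definition is_group {G : Type} (mul : G -> G -> G) (inv : G -> G) (e : G) : Prop :=
  (forall a b c, mul a (mul b c) = mul (mul a b) c) /\
  (forall a, mul e a = a /\ mul a e = a) /\
  (forall a, mul (inv a) a = e /\ mul a (inv a) = e).

Definition countable_type (G : Type) : Prop :=
  exists enum : nat -> G, forall g, exists n, enum n = g.

(* Unconditional (net) sum of a family indexed by an arbitrary type:
   has_usum f s  <->  the finite partial sums over finite sets F
   converge to s along the directed set of finite subsets. *)
Definition fin_sum {G : Type} (f : G -> C) (F : list G) : C :=
  fold_right Cplus (RtoC 0) (map f F).

Definition has_usum {G : Type} (f : G -> C) (s : C) : Prop :=
  forall eps : R, 0 < eps ->
    exists F0 : list G, forall F : list G, NoDup F -> incl F0 F ->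
      Cmod (Cminus (fin_sum f F) s) < eps.

Definition prob_measure {G : Type} (mu : G -> R) : Prop :=
  (forall g, 0 <= mu g) /\ has_usum (fun g => RtoC (mu g)) (RtoC 1).

Inductive gen_semigroup {G : Type} (mul : G -> G -> G) (mu : G -> R) : G -> Prop :=
  | gs_supp : forall g, 0 < mu g -> gen_semigroup mul mu g
  | gs_mul : forall a b, gen_semigroup mul mu a -> gen_semigroup mul mu b ->
             gen_semigroup mul mu (mul a b).

(* Bounded operators on l^2(G), represented by their matrix coefficients
   T x y = <T delta_y, delta_x>.  A matrix defines an element of B(l^2(G))
   iff the associated sesquilinear form is bounded on finitely supported
   vectors: |sum_{x,y in F} conj(eta x) T x y xi y| <= M ||xi|| ||eta||. *)
Definition l2norm_fin {G : Type} (xi : G -> C) (F : list G) : R :=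
  sqrt (fold_right Rplus 0 (map (fun x => (Cmod (xi x))^2) F)).

Definition bounded_op {G : Type} (T : G -> G -> C) : Prop :=
  exists M : R, forall (F : list G) (xi eta : G -> C), NoDup F ->
    Cmod (fin_sum (fun x => fin_sum (fun y => Cmult (Cconj (eta x)) (Cmult (T x y) (xi y))) F) F)
    <= M * l2norm_fin xi F * l2norm_fin eta F.

(* Matrix coefficients of rho_g T rho_g^* with rho_g delta_x = delta_{x g^-1}:
   <rho_g T rho_g^* delta_y, delta_x> = T (x g) (y g).  Hence
   P_mu(T) = lambda T  reads, coefficientwise (the defining series converges
   sigma-weakly, so coefficients are the absolutely convergent sums): *)
Definition markov_eig {G : Type} (mul : G -> G -> G) (mu : G -> R)
  (T : G -> G -> C) (lam : C) : Prop :=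
  forall x y, has_usum (fun g => Cmult (RtoC (mu g)) (T (mul x g) (mul y g)))
                       (Cmult lam (T x y)).

(* Main.v *)
Require Import Defs.
From Stdlib Require Import Reals List Lra Lia ClassicalEpsilon Classical.
From Coquelicot Require Import Coquelicot.
Open Scope R_scope.

Definition eqdec {G : Type} (a b : G) : {a = b} + {a <> b} :=
  excluded_middle_informative (a = b).

Lemma extend_list {G : Type} (g0 : G) (F0 : list G) :
  exists L, NoDup (g0 :: L) /\ incl F0 (g0 :: L).
Proof.
  exists (nodup eqdec (remove eqdec g0 F0)). split.
  - constructor.
    + rewrite nodup_In. apply remove_In.
    + apply NoDup_nodup.
  - intros z Hz. destruct (eqdec z g0) as [->|n]; [now left|right].
    rewrite nodup_In. now apply in_in_remove.
Qed.

Definition rsum {G : Type} (mu : G -> R) (l : list G) : R :=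
  fold_right Rplus 0 (map mu l).

Lemma fin_sum_R {G : Type} (mu : G -> R) l :
  fin_sum (fun g => RtoC (mu g)) l = RtoC (rsum mu l).
Proof.
  induction l; simpl. reflexivity. unfold fin_sum in *. simpl. rewrite IHl.
  unfold RtoC, Cplus; simpl. f_equal; ring.
Qed.

Lemma rsum_ge0 {G : Type} (mu : G -> R) l : (forall g, 0 <= mu g) -> 0 <= rsum mu l.
Proof. intros H; induction l; unfold rsum in *; simpl. lra. specialize (H a). lra. Qed.

Lemma fin_sum_bound {G : Type} (mu : G -> R) (h : G -> C) (S : R) l :
  (forall g, 0 <= mu g) -> (forall g, Cmod (h g) <= S) ->
  Cmod (fin_sum (fun g => Cmult (RtoC (mu g)) (h g)) l) <= rsum mu l * S.
Proof.
  intros H1 H2; induction l; simpl.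
  - unfold fin_sum; simpl. rewrite Cmod_0. unfold rsum; simpl; lra.
  - unfold fin_sum in *; simpl. eapply Rle_trans. apply Cmod_triangle.
    rewrite Cmod_mult, Cmod_R, Rabs_pos_eq by apply H1.
    unfold rsum in *; simpl.
    specialize (H2 a). specialize (H1 a).
    assert (mu a * Cmod (h a) <= mu a * S) by (apply Rmult_le_compat_l; auto).
    lra.
Qed.

Lemma step_lemma {G : Type} (mul : G -> G -> G) (mu : G -> R) (T : G -> G -> C)
  (lam : C) (S : R) (Hmu : prob_measure mu) (Heig : markov_eig mul mu T lam)
  (HS : forall x y, Cmod (T x y) <= S) (S0 : 0 <= S) x y g0 :
  mu g0 <= 1 /\
  Cmod (Cminus (Cmult lam (T x y)) (Cmult (RtoC (mu g0)) (T (mul x g0) (mul y g0))))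
    <= (1 - mu g0) * S.
Proof.
  destruct Hmu as [Hpos Hsum].
  assert (key : forall eps, 0 < eps -> mu g0 <= 1 + eps /\
    Cmod (Cminus (Cmult lam (T x y)) (Cmult (RtoC (mu g0)) (T (mul x g0) (mul y g0))))
    <= (1 - mu g0) * S + eps * (1 + S)).
  { intros eps Heps.
    destruct (Heig x y eps Heps) as [F1 H1].
    destruct (Hsum eps Heps) as [F2 H2].
    destruct (extend_list g0 (F1 ++ F2)) as [L [HN Hinc]].
    assert (i1 : incl F1 (g0 :: L)) by (intros z Hz; apply Hinc, in_or_app; auto).
    assert (i2 : incl F2 (g0 :: L)) by (intros z Hz; apply Hinc, in_or_app; auto).
    specialize (H1 _ HN i1). specialize (H2 _ HN i2).
    rewrite fin_sum_R in H2. unfold rsum in H2; simpl in H2.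
    fold (rsum mu L) in H2.
    assert (HL := rsum_ge0 mu L Hpos).
    assert (Hb := fin_sum_bound mu (fun g => T (mul x g) (mul y g)) S L Hpos (fun g => HS _ _)).
    assert (E : Cminus (RtoC (mu g0 + rsum mu L)) (RtoC 1) = RtoC (mu g0 + rsum mu L - 1)).
    { unfold Cminus, RtoC, Cplus, Copp; simpl. f_equal; ring. }
    rewrite E, Cmod_R in H2. apply Rabs_def2 in H2. destruct H2 as [H2a H2b].
    split. lra.
    unfold fin_sum in H1; simpl in H1. fold (fin_sum (fun g => Cmult (RtoC (mu g)) (T (mul x g) (mul y g))) L) in H1.
    set (A := Cmult (RtoC (mu g0)) (T (mul x g0) (mul y g0))) in *.
    set (B := fin_sum (fun g => Cmult (RtoC (mu g)) (T (mul x g) (mul y g))) L) in *.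
    assert (E2 : Cminus (Cmult lam (T x y)) A = Cplus (Copp (Cminus (Cplus A B) (Cmult lam (T x y)))) B).
    { field. }
    rewrite E2. eapply Rle_trans. apply Cmod_triangle. rewrite Cmod_opp.
    assert (rsum mu L * S <= (1 - mu g0 + eps) * S) by (apply Rmult_le_compat_r; lra).
    nra. }
  split.
  - apply Rle_plus_epsilon. intros eps He. apply (key eps He).
  - apply Rle_plus_epsilon. intros eps He.
    assert (Hp : 0 < eps / (1 + S)) by (apply Rdiv_lt_0_compat; lra).
    destruct (key _ Hp) as [_ K]. replace (eps / (1+S) * (1+S)) with eps in K by (field; lra).
    exact K.
Qed.

Definition wprod {G : Type} (mul : G -> G -> G) (e : G) (w : list G) : G :=
  fold_right mul e w.

Lemma wprod_app {G : Type} (mul : G -> G -> G) (inv : G -> G) (e : G)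
  (Hgrp : is_group mul inv e) w1 w2 :
  wprod mul e (w1 ++ w2) = mul (wprod mul e w1) (wprod mul e w2).
Proof.
  destruct Hgrp as [Ha [He _]].
  induction w1; simpl. now rewrite (proj1 (He _)).
  unfold wprod in *. simpl. rewrite IHw1. apply Ha.
Qed.

Lemma word_of {G : Type} (mul : G -> G -> G) (inv : G -> G) (e : G)
  (Hgrp : is_group mul inv e) (mu : G -> R) g :
  gen_semigroup mul mu g ->
  exists w, w <> nil /\ List.Forall (fun h => 0 < mu h) w /\ wprod mul e w = g.
Proof.
  induction 1.
  - exists (cons g nil). split. discriminate. split. auto.
    simpl. apply (proj2 (proj1 (proj2 Hgrp) g)).
  - destruct IHgen_semigroup1 as [w1 [n1 [f1 p1]]].
    destruct IHgen_semigroup2 as [w2 [n2 [f2 p2]]].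
    exists (w1 ++ w2). split.
    + destruct w1; [contradiction|discriminate].
    + split. apply List.Forall_app; auto. rewrite (wprod_app mul inv e Hgrp), p1, p2. reflexivity.
Qed.

Definition wmass {G : Type} (mu : G -> R) (w : list G) : R := fold_right Rmult 1 (map mu w).

Lemma Cmod_pow (z : C) n : Cmod (pow_n z n) = Cmod z ^ n.
Proof.
  induction n; simpl. apply Cmod_1. change (mult z (pow_n z n)) with (Cmult z (pow_n z n)).
  rewrite Cmod_mult, IHn. reflexivity.
Qed.

Lemma chain {G : Type} (mul : G -> G -> G) (inv : G -> G) (e : G)
  (Hgrp : is_group mul inv e) (mu : G -> R) (T : G -> G -> C)
  (lam : C) (Hlam : Cmod lam = 1) (S : R) (Hmu : prob_measure mu) (Heig : markov_eig mul mu T lam)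
  (HS : forall x y, Cmod (T x y) <= S) (S0 : 0 <= S) w :
  0 <= wmass mu w <= 1 /\
  forall x y,
  Cmod (Cminus (Cmult (pow_n lam (length w)) (T x y))
               (Cmult (RtoC (wmass mu w)) (T (mul x (wprod mul e w)) (mul y (wprod mul e w)))))
    <= (1 - wmass mu w) * S.
Proof.
  induction w as [|g w IH].
  - unfold wmass; simpl. split. lra. intros x y.
    rewrite (proj2 (proj1 (proj2 Hgrp) x)), (proj2 (proj1 (proj2 Hgrp) y)).
    change (pow_n lam 0) with (RtoC 1).
    idtac.
    match goal with |- Cmod ?z <= _ => replace z with (RtoC 0) end. rewrite Cmod_0. lra. change (@one C_Ring) with (RtoC 1). field.
  - destruct IH as [[m0 m1] IH].
    assert (Hg0 : 0 <= mu g) by apply (proj1 Hmu).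
    unfold wmass in *; simpl. fold (wmass mu w) in *.
    split. split. nra.
    destruct (step_lemma mul mu T lam S Hmu Heig HS S0 e e g) as [Hg1 _]. nra.
    intros x y.
    destruct (step_lemma mul mu T lam S Hmu Heig HS S0 x y g) as [Hg1 St].
    specialize (IH (mul x g) (mul y g)).
    unfold wprod in *; simpl. rewrite !(proj1 Hgrp).
    change (pow_n lam (Datatypes.S (length w))) with (Cmult lam (pow_n lam (length w))).
    set (P := pow_n lam (length w)) in *.
    set (pw := fold_right mul e w) in *.
    set (A := T x y) in *. set (Bg := T (mul x g) (mul y g)) in *.
    set (D := T (mul (mul x g) pw) (mul (mul y g) pw)) in *.
    match goal with |- Cmod ?z <= _ =>
    replace z
      with (Cplus (Cmult P (Cminus (Cmult lam A) (Cmult (RtoC (mu g)) Bg)))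
                  (Cmult (RtoC (mu g)) (Cminus (Cmult P Bg) (Cmult (RtoC (wmass mu w)) D)))) end.
    2:{ change (mult lam P) with (Cmult lam P). rewrite RtoC_mult. field. }
    eapply Rle_trans. apply Cmod_triangle. rewrite !Cmod_mult.
    unfold P; rewrite Cmod_pow, Hlam, pow1, Cmod_R, Rabs_pos_eq by lra.
    assert (mu g * Cmod (Cminus (Cmult (pow_n lam (length w)) Bg) (Cmult (RtoC (wmass mu w)) D))
            <= mu g * ((1 - wmass mu w) * S)) by (apply Rmult_le_compat_l; auto).
    nra.
Qed.

Definition delta {G : Type} (a : G) (z : G) : C := if eqdec z a then RtoC 1 else RtoC 0.

Lemma conj1 : Cconj (RtoC 1) = RtoC 1.
Proof. unfold Cconj, RtoC; simpl; f_equal; ring. Qed.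
Lemma conj0 : Cconj (RtoC 0) = RtoC 0.
Proof. unfold Cconj, RtoC; simpl; f_equal; ring. Qed.

Lemma coef_bound {G : Type} (T : G -> G -> C) (HT : bounded_op T) :
  exists M, forall x y, Cmod (T x y) <= M.
Proof.
  destruct HT as [M HM]. exists M. intros x y.
  destruct (eqdec x y) as [<-|n].
  - specialize (HM (cons x nil) (delta x) (delta x)).
    unfold fin_sum, l2norm_fin, delta in HM; simpl in HM.
    destruct (eqdec x x); [|congruence].
    rewrite conj1, Cmod_1 in HM.
    rewrite ?Rmult_1_l, ?Rmult_0_l, ?Rplus_0_r, ?Rplus_0_l, ?sqrt_1 in HM.
    replace (Cplus (Cplus (Cmult (RtoC 1) (Cmult (T x x) (RtoC 1))) (RtoC 0)) (RtoC 0)) with (T x x) in HM by field.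
    replace M with (M * 1 * 1) by ring. apply HM. constructor. auto. constructor.
  - specialize (HM (cons x (cons y nil)) (delta y) (delta x)).
    unfold fin_sum, l2norm_fin, delta in HM; simpl in HM.
    destruct (eqdec x x); [|congruence].
    destruct (eqdec y y); [|congruence].
    destruct (eqdec x y); [congruence|].
    destruct (eqdec y x); [congruence|].
    rewrite conj1, conj0, Cmod_1, Cmod_0 in HM.
    rewrite ?Rmult_1_l, ?Rmult_0_l, ?Rplus_0_r, ?Rplus_0_l, ?sqrt_1 in HM.
    match type of HM with _ -> Cmod ?z <= _ => replace z with (T x y) in HM by field end.
    replace M with (M * 1 * 1) by ring. apply HM. constructor. simpl; intuition. constructor. auto. constructor.
Qed.

Lemma key_ineq (z : C) (a : R) : Cmod z = 1 -> z <> RtoC 1 -> 0 < a <= 1 ->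
  1 - a < Cmod (Cminus z (RtoC a)).
Proof.
  destruct z as [u v]. intros H1 H2 Ha. unfold Cmod, Cminus, Cplus, Copp, RtoC in *; cbn [fst snd] in *.
  assert (Hq : u ^ 2 + v ^ 2 = 1).
  { rewrite <- (sqrt_sqrt (u^2+v^2)) by nra. rewrite H1. ring. }
  assert (Hu : u < 1).
  { destruct (Req_dec u 1) as [->|n].
    - exfalso. apply H2. assert (v = 0) by nra. subst. reflexivity.
    - nra. }
  rewrite <- (sqrt_pow2 (1 - a)) by lra.
  apply sqrt_lt_1_alt. split. nra. nra.
Qed.

Lemma wmass_pos {G : Type} (mu : G -> R) w : List.Forall (fun h => 0 < mu h) w -> 0 < wmass mu w.
Proof. induction 1; unfold wmass in *; simpl. lra. nra. Qed.

Theorem corollary2p4 (G : Type) (mul : G -> G -> G) (inv : G -> G) (e : G)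
  (Hgrp : is_group mul inv e) (Hcount : countable_type G)
  (mu : G -> R) (Hmu : prob_measure mu)
  (Hgen : forall g : G, gen_semigroup mul mu g)
  (lam : C) (Hlam : Cmod lam = 1)
  (T : G -> G -> C) (HT : bounded_op T) (HT0 : exists x y, T x y <> RtoC 0)
  (Heig : markov_eig mul mu T lam) :
  exists k : nat, (0 < k)%nat /\ pow_n lam k = RtoC 1.
Proof.
  destruct (coef_bound T HT) as [M HM].
  destruct HT0 as [x0 [y0 Hxy0]].
  set (E := fun r => exists x y, r = Cmod (T x y)).
  destruct (completeness E) as [Sb [Hub Hlub]].
  { exists M. intros r [x [y ->]]. apply HM. }
  { exists (Cmod (T x0 y0)), x0, y0. reflexivity. }
  assert (HS : forall x y, Cmod (T x y) <= Sb) by (intros x y; apply Hub; exists x, y; reflexivity).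
  assert (Sp : 0 < Sb).
  { apply Rlt_le_trans with (Cmod (T x0 y0)); auto. apply Cmod_gt_0. exact Hxy0. }
  destruct (word_of mul inv e Hgrp mu e (Hgen e)) as [w [wn [wf wp]]].
  exists (length w). split.
  { destruct w; [contradiction|simpl; lia]. }
  destruct (classic (pow_n lam (length w) = RtoC 1)) as [h|h]; [exact h|exfalso].
  destruct (chain mul inv e Hgrp mu T lam Hlam Sb Hmu Heig HS (Rlt_le _ _ Sp) w) as [[a0 a1] Hc].
  assert (apos := wmass_pos mu w wf).
  set (a := wmass mu w) in *.
  set (z := pow_n lam (length w)) in *.
  assert (Hz : Cmod z = 1) by (unfold z; rewrite Cmod_pow, Hlam; apply pow1).
  assert (Hd := key_ineq z a Hz h (conj apos a1)).
  set (d := Cmod (Cminus z (RtoC a))) in *.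
  assert (Hb : forall x y, Cmod (T x y) <= (1 - a) * Sb / d).
  { intros x y. specialize (Hc x y). rewrite wp in Hc.
    rewrite (proj2 (proj1 (proj2 Hgrp) x)), (proj2 (proj1 (proj2 Hgrp) y)) in Hc.
    replace (Cminus (Cmult z (T x y)) (Cmult (RtoC a) (T x y))) with (Cmult (Cminus z (RtoC a)) (T x y)) in Hc by field.
    rewrite Cmod_mult in Hc. fold d in Hc.
    apply Rmult_le_reg_l with d. lra.
    replace (d * ((1 - a) * Sb / d)) with ((1 - a) * Sb) by (field; lra). exact Hc. }
  assert (Sb <= (1 - a) * Sb / d).
  { apply Hlub. intros r [x [y ->]]. apply Hb. }
  assert (Sb * d <= (1 - a) * Sb).
  { apply Rmult_le_reg_r with (/ d). apply Rinv_0_lt_compat; lra.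
    replace (Sb * d * / d) with Sb by (field; lra). exact H. }
  nra.
Qed.
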